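(* Let $k_0,k_1,k_{-1},k_2,e_T$ be positive real numbers and consider the system \[ \dot s = k_0-k_1(e_T-c)s+k_{-1}c,\qquad \dot c = k_1(e_T-c)s-(k_{-1}+k_2)c \] on $\{s\ge0,\ 0\le c\le e_T\}$. Define the set \[ W_1:=\left\{(s,c):\ s\ge 0,\ \max\left\{0,\ \frac{k_1e_Ts-k_0}{k_1s+k_{-1}}\right\}\le c\le \frac{k_1e_Ts}{k_1s+k_{-1}+k_2}\right\}. \] Then: (a) If the system has no stationary point with positive coordinates, i.e. $k_0>k_2e_T$, then $\frac{k_1e_Ts}{k_1s+k_{-1}+k_2}>\frac{k_1e_Ts-k_0}{k_1s+k_{-1}}$ for all $s\ge 0$, and $W_1$ extends to $s\to\infty$. If the system has the positive stationary point $(\widehat s,\widehat c)$, then the two curves $c=\frac{k_1e_Ts}{k_1s+k_{-1}+k_2}$ and $c=\frac{k_1e_Ts-k_0}{k_1s+k_{-1}}$ meet at this point, and $s\le\widehat s$, $c\le \widehat c$ for all points $(s,c)\in W_1$. (b) $W_1$ is positively invariant for the system, and $\dot s\ge 0$ on $W_1$.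
   Context: The curves $c=\frac{k_1e_Ts}{k_1s+k_{-1}+k_2}$ and $c=\frac{k_1e_Ts-k_0}{k_1s+k_{-1}}$ are the $c$-nullcline ($\dot c=0$) and the $s$-nullcline ($\dot s=0$), respectively. When $k_2e_T>k_0$ the system has the unique stationary point $(\widehat s,\widehat c)=\left(\frac{(k_{-1}+k_2)k_0}{k_1(k_2e_T-k_0)},\frac{k_0}{k_2}\right)$ with positive coordinates. *)

(* Defs.v *)
From Stdlib Require Import Reals.
From Coquelicot Require Import Coquelicot.
Open Scope R_scope.

Definition sdot (k0 k1 km1 k2 eT s c : R) : R :=
  k0 - k1 * (eT - c) * s + km1 * c.
Definition cdot (k0 k1 km1 k2 eT s c : R) : R :=
  k1 * (eT - c) * s - (km1 + k2) * c.

Definition cnull (k0 k1 km1 k2 eT s : R) : R := k1 * eT * s / (k1 * s + km1 + k2).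
Definition snull (k0 k1 km1 k2 eT s : R) : R := (k1 * eT * s - k0) / (k1 * s + km1).

Definition W1 (k0 k1 km1 k2 eT s c : R) : Prop :=
  0 <= s /\ Rmax 0 (snull k0 k1 km1 k2 eT s) <= c /\ c <= cnull k0 k1 km1 k2 eT s.

(* The positive stationary point (meaningful when k2 eT > k0) *)
Definition shat (k0 k1 km1 k2 eT : R) : R := (km1 + k2) * k0 / (k1 * (k2 * eT - k0)).
Definition chat (k0 k1 km1 k2 eT : R) : R := k0 / k2.

Definition is_solution (k0 k1 km1 k2 eT T : R) (x y : R -> R) : Prop :=
  forall t, 0 <= t < T ->
    is_derive x t (sdot k0 k1 km1 k2 eT (x t) (y t)) /\
    is_derive y t (cdot k0 k1 km1 k2 eT (x t) (y t)).

Definition positively_invariant (k0 k1 km1 k2 eT : R) (A : R -> R -> Prop) : Prop :=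
  forall (T : R) (x y : R -> R), 0 < T ->
    is_solution k0 k1 km1 k2 eT T x y -> A (x 0) (y 0) ->
    forall t, 0 <= t < T -> A (x t) (y t).

(* Main.v *)
From Stdlib Require Import Reals Lra Psatz.
Require Import Defs.
From Coquelicot Require Import Coquelicot.
Open Scope R_scope.

Lemma cont_eps (f : R -> R) x : continuity_pt f x -> forall eps, 0 < eps ->
  exists d, 0 < d /\ forall y, Rabs (y - x) < d -> Rabs (f y - f x) < eps.
Proof.
  intros H eps He.
  destruct (H eps He) as [d [Hd Hy]].
  exists d; split; auto.
  intros y Hyd.
  destruct (Req_dec y x) as [->|Hne].
  - rewrite Rminus_diag, Rabs_R0; lra.
  - apply (Hy y). split. split. exact I. auto. exact Hyd.
Qed.

Lemma Rmin_formula a b : Rmin a b = (a + b - Rabs (a - b)) / 2.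
Proof.
  unfold Rmin; destruct (Rle_dec a b).
  - rewrite Rabs_left1 by lra; field.
  - rewrite Rabs_right by lra; field.
Qed.

Lemma cont_min (f g : R -> R) x : continuity_pt f x -> continuity_pt g x ->
  continuity_pt (fun t => Rmin (f t) (g t)) x.
Proof.
  intros Hf Hg.
  apply continuity_pt_ext with (f := fun t => (f t + g t - Rabs (f t - g t)) / 2).
  { intros; now rewrite Rmin_formula. }
  apply continuity_pt_filterlim in Hf. apply continuity_pt_filterlim in Hg.
  apply continuity_pt_filterlim.
  apply (continuous_mult (fun t => f t + g t - Rabs (f t - g t)) (fun _ => /2)).
  2: apply continuous_const.
  apply (continuous_minus (fun t => f t + g t) (fun t => Rabs (f t - g t))).
  apply (continuous_plus f g); auto.
  apply (continuous_comp (fun t => f t - g t) Rabs).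
  apply (continuous_minus f g); auto.
  apply continuous_Rabs.
Qed.

Lemma first_hit (m : R -> R) t' : 0 <= t' ->
  (forall s, 0 <= s <= t' -> continuity_pt m s) -> m 0 > 0 -> m t' <= 0 ->
  exists t0, 0 < t0 <= t' /\ m t0 = 0 /\ forall s, 0 <= s < t0 -> m s > 0.
Proof.
  intros Ht Hc H0 Ht'.
  set (E := fun tau => 0 <= tau <= t' /\ forall s, 0 <= s <= tau -> m s > 0).
  assert (Hb : bound E). { exists t'. intros z [Hz _]. lra. }
  assert (He : exists z, E z). { exists 0. split. lra. intros s Hs. replace s with 0 by lra. auto. }
  destruct (completeness E Hb He) as [t0 [Hub Hlub]].
  assert (Ht0 : 0 <= t0) by (apply Hub; destruct He; unfold E; split; [lra|]; intros s Hs; replace s with 0 by lra; auto).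
  assert (Ht0' : t0 <= t') by (apply Hlub; intros z [Hz _]; lra).
  assert (Hpos : forall s, 0 <= s < t0 -> m s > 0).
  { intros s Hs. destruct (Rlt_le_dec 0 (m s)) as [|Hms]; auto.
    exfalso. assert (t0 <= s); [|lra]. apply Hlub. intros z [Hz Hz2].
    destruct (Rle_lt_dec z s) as [|Hzs]; auto. exfalso.
    specialize (Hz2 s ltac:(lra)). lra. }
  assert (Hm0 : m t0 = 0).
  { destruct (Rtotal_order (m t0) 0) as [Hneg|[Heq|Hposi]]; auto; exfalso.
    - assert (t0 <> 0) by (intro E0; rewrite E0 in Hneg; lra).
      destruct (cont_eps m t0 (Hc t0 ltac:(lra)) (- m t0) ltac:(lra)) as [d [Hd Hdd]].
      set (s := Rmax 0 (t0 - d/2)).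
      assert (Hs1 : 0 <= s) by apply Rmax_l.
      assert (Hs2 : s < t0) by (unfold s; apply Rmax_lub_lt; lra).
      assert (Hs3 : t0 - d/2 <= s) by apply Rmax_r.
      specialize (Hpos s ltac:(lra)).
      specialize (Hdd s ltac:(rewrite Rabs_left by lra; lra)).
      apply Rabs_def2 in Hdd. lra.
    - assert (t0 < t') by (destruct (Req_dec t0 t'); [subst; lra | lra]).
      destruct (cont_eps m t0 (Hc t0 ltac:(lra)) (m t0) ltac:(lra)) as [d [Hd Hdd]].
      set (s := Rmin t' (t0 + d/2)).
      assert (Hs1 : s <= t') by apply Rmin_l.
      assert (Hs2 : t0 < s) by (unfold s; apply Rmin_glb_lt; lra).
      assert (Hs3 : s <= t0 + d/2) by apply Rmin_r.
      assert (E s).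
      { split. lra. intros z Hz. destruct (Rlt_le_dec z t0). apply Hpos; lra.
        specialize (Hdd z ltac:(rewrite Rabs_right by lra; lra)).
        apply Rabs_def2 in Hdd. lra. }
      specialize (Hub s H1). lra. }
  exists t0. split; [|split; auto].
  split; auto. destruct (Req_dec t0 0) as [E0|]; [rewrite E0 in Hm0; lra | lra].
Qed.

Lemma deriv_at_hit (f : R -> R) t0 d : is_derive f t0 d -> f t0 = 0 -> 0 < t0 ->
  (forall s, 0 <= s < t0 -> f s > 0) -> d <= 0.
Proof.
  intros Hd Hf Ht Hpos.
  apply is_derive_Reals in Hd.
  destruct (Rle_lt_dec d 0) as [|Hdp]; auto. exfalso.
  destruct (Hd (d/2) ltac:(lra)) as [del Hdel].
  set (h := - Rmin (del/2) (t0/2)).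
  assert (Hh1 : Rmin (del/2) (t0/2) <= del/2) by apply Rmin_l.
  assert (Hh2 : Rmin (del/2) (t0/2) <= t0/2) by apply Rmin_r.
  assert (Hh3 : 0 < Rmin (del/2) (t0/2)) by (apply Rmin_glb_lt; destruct del; simpl; lra).
  assert (Hdl := cond_pos del).
  specialize (Hdel h ltac:(unfold h; lra) ltac:(unfold h; rewrite Rabs_left by lra; lra)).
  rewrite Hf in Hdel. apply Rabs_def2 in Hdel.
  specialize (Hpos (t0 + h) ltac:(unfold h; lra)).
  assert (Hq : (f (t0 + h) - 0) / h < 0).
  { unfold Rdiv. rewrite Rminus_0_r.
    assert (/ h < 0) by (apply Rinv_lt_0_compat; unfold h; lra). nra. }
  lra.
Qed.
Lemma der_u k0 k1 km1 k2 eT (x y : R -> R) t a b :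
  is_derive x t a -> is_derive y t b ->
  is_derive (fun s => sdot k0 k1 km1 k2 eT (x s) (y s)) t
    ((- k1 * (eT - y t)) * a + (k1 * x t + km1) * b).
Proof.
  intros Ha Hb. unfold sdot.
  evar (l : R).
  assert (is_derive (fun s => k0 - k1 * (eT - y s) * x s + km1 * y s) t l).
  { unfold l. auto_derive. repeat split; eexists; eassumption.
    reflexivity. }
  eapply is_derive_ext. intros; reflexivity.
  replace ((- k1 * (eT - y t)) * a + (k1 * x t + km1) * b) with l. exact H.
  unfold l. replace (Derive (fun z => x z) t) with a by (symmetry; apply is_derive_unique; exact Ha). replace (Derive (fun z => y z) t) with b by (symmetry; apply is_derive_unique; exact Hb). ring.
Qed.
Lemma der_v k0 k1 km1 k2 eT (x y : R -> R) t a b :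
  is_derive x t a -> is_derive y t b ->
  is_derive (fun s => cdot k0 k1 km1 k2 eT (x s) (y s)) t
    ((k1 * (eT - y t)) * a + (- k1 * x t - km1 - k2) * b).
Proof.
  intros Ha Hb. unfold cdot.
  evar (l : R).
  assert (is_derive (fun s => k1 * (eT - y s) * x s - (km1 + k2) * y s) t l).
  { unfold l. auto_derive. repeat split; eexists; eassumption. reflexivity. }
  eapply is_derive_ext. intros; reflexivity.
  replace ((k1 * (eT - y t)) * a + (- k1 * x t - km1 - k2) * b) with l. exact H.
  unfold l. replace (Derive (fun z => x z) t) with a by (symmetry; apply is_derive_unique; exact Ha). replace (Derive (fun z => y z) t) with b by (symmetry; apply is_derive_unique; exact Hb). ring.
Qed.

Lemma der_pe (f : R -> R) t d e N :
  is_derive f t d -> is_derive (fun s => f s + e * exp (N * s)) t (d + e * (N * exp (N * t))).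
Proof.
  intros Hf.
  apply (is_derive_plus f (fun s => e * exp (N * s))). exact Hf.
  auto_derive. auto. ring.
Qed.

Lemma der_cont (f : R -> R) t d : is_derive f t d -> continuity_pt f t.
Proof.
  intros H. apply derivable_continuous_pt. exists d. now apply is_derive_Reals.
Qed.

Lemma min4_pos a b c d : Rmin (Rmin a b) (Rmin c d) > 0 -> a > 0 /\ b > 0 /\ c > 0 /\ d > 0.
Proof. unfold Rmin; repeat destruct Rle_dec; lra. Qed.

Lemma min4_zero a b c d : Rmin (Rmin a b) (Rmin c d) = 0 ->
  (a >= 0 /\ b >= 0 /\ c >= 0 /\ d >= 0) /\ (a = 0 \/ b = 0 \/ c = 0 \/ d = 0).
Proof. unfold Rmin; repeat destruct Rle_dec; lra. Qed.

Lemma exp_mono a b : a <= b -> exp a <= exp b.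
Proof. intros [H|H]. left; now apply exp_increasing. subst; lra. Qed.

Lemma small_eps w e0 e : 0 < e0 -> 0 < e -> (forall eps, 0 < eps <= e0 -> w + eps * e > 0) -> 0 <= w.
Proof.
  intros H0 He H. destruct (Rle_lt_dec 0 w) as [|Hw]; auto. exfalso.
  set (eps := Rmin e0 (- w / (2 * e))).
  assert (Hq : 0 < - w / (2 * e)) by (apply Rdiv_lt_0_compat; lra).
  assert (H1 : 0 < eps) by (apply Rmin_glb_lt; lra).
  assert (H2 : eps <= e0) by apply Rmin_l.
  assert (H3 : eps <= - w / (2 * e)) by apply Rmin_r.
  specialize (H eps ltac:(lra)).
  assert (eps * e <= - w / (2 * e) * e) by (apply Rmult_le_compat_r; lra).
  replace (- w / (2 * e) * e) with (- w / 2) in H4 by (field; lra).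
  lra.
Qed.

Lemma W1_iff k0 k1 km1 k2 eT s c : 0 < k1 -> 0 < km1 -> 0 < k2 -> 0 <= s ->
  (W1 k0 k1 km1 k2 eT s c <-> 0 <= s /\ 0 <= c /\ sdot k0 k1 km1 k2 eT s c >= 0 /\ cdot k0 k1 km1 k2 eT s c >= 0).
Proof.
  intros H1 H2 H3 Hs. unfold W1, snull, cnull, sdot, cdot.
  assert (D1 : k1 * s + km1 > 0) by nra.
  assert (D2 : k1 * s + km1 + k2 > 0) by nra.
  assert (Hr : forall a, c <= a / (k1 * s + km1 + k2) <-> c * (k1 * s + km1 + k2) <= a).
  { intros a. split; intro H.
    - apply Rmult_le_compat_r with (r := k1 * s + km1 + k2) in H; [|lra].
      replace (a / (k1 * s + km1 + k2) * (k1 * s + km1 + k2)) with a in H by (field; lra). exact H.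
    - replace c with (c * (k1 * s + km1 + k2) / (k1 * s + km1 + k2)) by (field; lra).
      apply Rmult_le_compat_r; [apply Rlt_le, Rinv_0_lt_compat; lra | exact H]. }
  split.
  - intros [_ [Hm Hc]]. apply Hr in Hc.
    assert (0 <= c) by (eapply Rle_trans; [apply Rmax_l | exact Hm]).
    assert ((k1 * eT * s - k0) / (k1 * s + km1) <= c) by (eapply Rle_trans; [apply Rmax_r | exact Hm]).
    apply (Rle_div_l _ _ _ D1) in H0.
    repeat split; auto; nra.
  - intros [_ [Hc [Hu Hv]]]. split; auto. split.
    + apply Rmax_lub; auto. apply (Rle_div_l _ _ _ D1). nra.
    + apply Hr. nra.
Qed.

Lemma rabs_b a B : Rabs a <= B -> - B <= a <= B.
Proof. unfold Rabs; destruct Rcase_abs; intros; lra. Qed.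

Lemma claim k0 k1 km1 k2 eT (x y : R -> R) t B N eps :
  0 < k0 -> 0 < k1 -> 0 < km1 -> 0 < k2 -> 0 < eT -> 0 <= t ->
  (forall s, 0 <= s <= t -> is_derive x s (sdot k0 k1 km1 k2 eT (x s) (y s)) /\
                          is_derive y s (cdot k0 k1 km1 k2 eT (x s) (y s))) ->
  (forall s, 0 <= s <= t -> Rabs (x s) <= B /\ Rabs (y s) <= B) ->
  N = 1 + 2*k1*eT + 2*k1*B + km1 + k2 ->
  0 < eps -> eps * exp (N*t) * (t+1) < km1/(2*k1) -> eps * exp (N*t) < (km1+k2)*eT ->
  sdot k0 k1 km1 k2 eT (x 0) (y 0) >= 0 -> cdot k0 k1 km1 k2 eT (x 0) (y 0) >= 0 ->
  0 <= x 0 -> y 0 < eT ->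
  forall tau, 0 <= tau <= t ->
    sdot k0 k1 km1 k2 eT (x tau) (y tau) + eps * exp (N * tau) > 0 /\
    cdot k0 k1 km1 k2 eT (x tau) (y tau) + eps * exp (N * tau) > 0.
Proof.
  intros Hk0 Hk1 Hkm1 Hk2 HeT Ht Hd HB HN Heps Hc1 Hc2 Hu0 Hv0 Hx0 Hy0 tau1 Htau1.
  assert (HB0 : 0 <= B) by (destruct (HB 0 ltac:(lra)) as [Hb _]; pose proof (Rabs_pos (x 0)); lra).
  assert (HNp : 0 < N) by (rewrite HN; nra).
  set (u := fun s => sdot k0 k1 km1 k2 eT (x s) (y s)) in *.
  set (v := fun s => cdot k0 k1 km1 k2 eT (x s) (y s)) in *.
  set (P1 := fun s => u s + eps * exp (N * s)).
  set (P2 := fun s => v s + eps * exp (N * s)).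
  set (P3 := fun s => x s + km1 / (2 * k1)).
  set (P4 := fun s => eT - y s).
  set (m := fun s => Rmin (Rmin (P1 s) (P2 s)) (Rmin (P3 s) (P4 s))).
  assert (Hm1 : m tau1 <= P1 tau1) by (unfold m; eapply Rle_trans; apply Rmin_l).
  assert (Hm2 : m tau1 <= P2 tau1) by (unfold m; eapply Rle_trans; [apply Rmin_l | apply Rmin_r]).
  destruct (Rle_lt_dec (P1 tau1) 0) as [Hbad|Hg1];
  [|destruct (Rle_lt_dec (P2 tau1) 0) as [Hbad|Hg2]; [|split; assumption]];
  exfalso; (assert (Hmt : m tau1 <= 0) by lra); clear Hm1 Hm2 Hbad.
  all: assert (HP1d : forall s, 0 <= s <= t -> is_derive P1 s
           ((- k1 * (eT - y s)) * u s + (k1 * x s + km1) * v s + eps * (N * exp (N * s))))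
         by (intros s Hs; destruct (Hd s Hs); apply der_pe, der_u; auto).
  all: assert (HP2d : forall s, 0 <= s <= t -> is_derive P2 s
           ((k1 * (eT - y s)) * u s + (- k1 * x s - km1 - k2) * v s + eps * (N * exp (N * s))))
         by (intros s Hs; destruct (Hd s Hs); apply der_pe, der_v; auto).
  all: assert (Hcont : forall s, 0 <= s <= tau1 -> continuity_pt m s)
         by (intros s Hs; unfold m; apply cont_min; apply cont_min;
             [ eapply der_cont, HP1d; lra
             | eapply der_cont, HP2d; lra
             | eapply der_cont; apply (is_derive_plus x (fun _ => km1 / (2 * k1))); [apply Hd; lra | apply is_derive_const]
             | eapply der_cont; apply (is_derive_minus (fun _ => eT) y); [apply is_derive_const | apply Hd; lra]]).
  all: assert (Hm0 : m 0 > 0)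
         by (assert (0 < km1 / (2 * k1)) by (apply Rdiv_lt_0_compat; lra);
             unfold m, P1, P2, P3, P4, u, v; rewrite Rmult_0_r, exp_0;
             apply Rmin_glb_lt; apply Rmin_glb_lt; lra).
  all: destruct (first_hit m tau1 ltac:(lra) Hcont Hm0 Hmt) as [t0 [Ht0 [Hmt0 Hpos]]].
  all: destruct (min4_zero _ _ _ _ Hmt0) as [[G1 [G2 [G3 G4]]] Hcase].
  all: assert (Hposs : forall s, 0 <= s < t0 -> P1 s > 0 /\ P2 s > 0 /\ P3 s > 0 /\ P4 s > 0)
         by (intros s Hs; apply min4_pos, Hpos, Hs).
  all: assert (Ht0t : 0 <= t0 <= t) by lra.
  all: destruct (HB t0 Ht0t) as [Bx By]; apply rabs_b in Bx; apply rabs_b in By.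
  all: set (e := exp (N * t0)).
  all: assert (He : 0 < e) by apply exp_pos.
  all: assert (HeH : e <= exp (N * t)) by (apply exp_mono; nra).
  all: unfold P1, P2, P3, P4 in G1, G2, G3, G4, Hcase; fold e in G1, G2, Hcase.
  all: destruct Hcase as [C|[C|[C|C]]].
  all: try (
    assert (Hdd := deriv_at_hit P1 t0 _ (HP1d t0 Ht0t) C ltac:(lra)
                 (fun s Hs => proj1 (Hposs s Hs)));
    fold e in Hdd;
    assert (Hbeta : k1 * x t0 + km1 >= km1 / 2)
      by (assert (k1 * (km1 / (2 * k1)) = km1 / 2) by (field; lra); nra);
    assert (HQ : k1 * (eT - y t0) - (k1 * x t0 + km1) + N >= 1) by (rewrite HN; nra);
    assert (Hpr1 : 0 < eps * e * (k1 * (eT - y t0) - (k1 * x t0 + km1) + N))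
      by (apply Rmult_lt_0_compat; [apply Rmult_lt_0_compat|]; lra);
    assert (Hpr2 : 0 <= (k1 * x t0 + km1) * (v t0 + eps * e)) by (apply Rmult_le_pos; lra);
    assert (Hu : u t0 = - eps * e) by lra;
    rewrite Hu in Hdd; nra).
  all: try (
    assert (Hdd := deriv_at_hit P2 t0 _ (HP2d t0 Ht0t) C ltac:(lra)
                 (fun s Hs => proj1 (proj2 (Hposs s Hs))));
    fold e in Hdd;
    assert (HQ : - k1 * (eT - y t0) + k1 * x t0 + km1 + k2 + N >= 1) by (rewrite HN; nra);
    assert (Hpr1 : 0 < eps * e * (- k1 * (eT - y t0) + k1 * x t0 + km1 + k2 + N))
      by (apply Rmult_lt_0_compat; [apply Rmult_lt_0_compat|]; lra);
    assert (Hpr2 : 0 <= (k1 * (eT - y t0)) * (u t0 + eps * e)) by (apply Rmult_le_pos; nra);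
    assert (Hv : v t0 = - eps * e) by lra;
    rewrite Hv in Hdd; nra).
  all: try (
    assert (Hy : y t0 = eT) by lra;
    assert (Hv : v t0 = - (km1 + k2) * eT) by (unfold v, cdot; rewrite Hy; ring);
    assert (eps * e <= eps * exp (N * t)) by (apply Rmult_le_compat_l; lra);
    nra).
  all: assert (Hmvt : exists c, x t0 - x 0 = u c * (t0 - 0) /\ 0 < c < t0)
         by (apply MVT_cor2; [lra | intros c Hc; apply is_derive_Reals; apply Hd; lra]).
  all: destruct Hmvt as [c [Hc Hc0]].
  all: destruct (Hposs c ltac:(lra)) as [Q1 _]; unfold P1 in Q1.
  all: assert (exp (N * c) <= exp (N * t)) by (apply exp_mono; nra).
  all: assert (eps * exp (N * c) <= eps * exp (N * t)) by (apply Rmult_le_compat_l; lra).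
  all: assert (u c >= - (eps * exp (N * t))) by lra.
  all: assert (u c * t0 >= - (eps * exp (N * t)) * t0) by (apply Rmult_ge_compat_r; lra).
  all: assert (- (eps * exp (N * t)) * t0 >= - (eps * exp (N * t)) * (t + 1))
         by (assert (0 < eps * exp (N * t)) by (apply Rmult_lt_0_compat; [lra | apply exp_pos]); nra).
  all: lra.
Qed.

Lemma invariance k0 k1 km1 k2 eT :
  0 < k0 -> 0 < k1 -> 0 < km1 -> 0 < k2 -> 0 < eT ->
  positively_invariant k0 k1 km1 k2 eT (W1 k0 k1 km1 k2 eT).
Proof.
  intros Hk0 Hk1 Hkm1 Hk2 HeT T x y HT Hsol HW0 t Ht.
  assert (Hd : forall s, 0 <= s <= t -> is_derive x s (sdot k0 k1 km1 k2 eT (x s) (y s)) /\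
                          is_derive y s (cdot k0 k1 km1 k2 eT (x s) (y s)))
    by (intros s Hs; apply Hsol; lra).
  assert (Hx00 : 0 <= x 0) by (destruct HW0; auto).
  apply W1_iff in HW0; auto. destruct HW0 as [_ [Hy00 [Hu0 Hv0]]].
  assert (Hy0 : y 0 < eT).
  { destruct (Rlt_le_dec (y 0) eT) as [|Hge]; auto. exfalso. unfold cdot in Hv0.
    assert (0 <= k1 * (y 0 - eT) * x 0) by (apply Rmult_le_pos; [apply Rmult_le_pos|]; lra).
    assert (0 < (km1 + k2) * y 0) by (apply Rmult_lt_0_compat; lra). lra. }
  destruct (continuity_ab_maj (fun s => Rabs (x s) + Rabs (y s)) 0 t ltac:(lra)) as [Mx [HMx _]].
  { intros c Hc. destruct (Hd c Hc) as [Dx Dy].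
    apply der_cont in Dx. apply der_cont in Dy.
    apply continuity_pt_filterlim in Dx. apply continuity_pt_filterlim in Dy.
    apply continuity_pt_filterlim.
    apply (continuous_plus (fun s => Rabs (x s)) (fun s => Rabs (y s))).
    apply (continuous_comp x Rabs); auto. apply continuous_Rabs.
    apply (continuous_comp y Rabs); auto. apply continuous_Rabs. }
  set (B := Rabs (x Mx) + Rabs (y Mx)) in *.
  assert (HB : forall s, 0 <= s <= t -> Rabs (x s) <= B /\ Rabs (y s) <= B).
  { intros s Hs. specialize (HMx s Hs). simpl in HMx.
    pose proof (Rabs_pos (x s)). pose proof (Rabs_pos (y s)). lra. }
  assert (HB0 : 0 <= B) by (unfold B; pose proof (Rabs_pos (x Mx)); pose proof (Rabs_pos (y Mx)); lra).
  set (N := 1 + 2*k1*eT + 2*k1*B + km1 + k2).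
  assert (HNp : 0 < N) by (unfold N; nra).
  set (H := exp (N * t)).
  assert (HH : 0 < H) by apply exp_pos.
  set (a := km1 / (4 * k1 * H * (t + 1))).
  set (b := (km1 + k2) * eT / (2 * H)).
  assert (Ha : 0 < a) by (unfold a; apply Rdiv_lt_0_compat; [lra | apply Rmult_lt_0_compat; [nra | lra]]).
  assert (Hb : 0 < b) by (unfold b; apply Rdiv_lt_0_compat; nra).
  set (e0 := Rmin a b).
  assert (He0 : 0 < e0) by (apply Rmin_glb_lt; lra).
  assert (Hcl : forall eps, 0 < eps <= e0 -> forall tau, 0 <= tau <= t ->
    sdot k0 k1 km1 k2 eT (x tau) (y tau) + eps * exp (N * tau) > 0 /\
    cdot k0 k1 km1 k2 eT (x tau) (y tau) + eps * exp (N * tau) > 0).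
  { intros eps Heps.
    assert (E1 : eps <= a) by (eapply Rle_trans; [apply Heps | apply Rmin_l]).
    assert (E2 : eps <= b) by (eapply Rle_trans; [apply Heps | apply Rmin_r]).
    apply (claim k0 k1 km1 k2 eT x y t B N eps); auto; try lra.
    - assert (eps * H * (t + 1) <= a * H * (t + 1)) by (apply Rmult_le_compat_r; [lra|]; apply Rmult_le_compat_r; lra).
      assert (a * H * (t + 1) = km1 / (4 * k1)) by (unfold a; field; lra).
      assert (km1 / (4 * k1) < km1 / (2 * k1)).
      { apply Rmult_lt_compat_l; [lra|]. apply Rinv_lt_contravar; nra. }
      fold H. lra.
    - assert (eps * H <= b * H) by (apply Rmult_le_compat_r; lra).
      assert (b * H = (km1 + k2) * eT / 2) by (unfold b; field; lra).
      fold H. nra. }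
  assert (Huv : forall tau, 0 <= tau <= t ->
     0 <= sdot k0 k1 km1 k2 eT (x tau) (y tau) /\ 0 <= cdot k0 k1 km1 k2 eT (x tau) (y tau)).
  { intros tau Htau. split.
    - apply (small_eps _ e0 (exp (N * tau))); auto. apply exp_pos.
      intros eps Heps. apply (Hcl eps Heps tau Htau).
    - apply (small_eps _ e0 (exp (N * tau))); auto. apply exp_pos.
      intros eps Heps. apply (Hcl eps Heps tau Htau). }
  assert (Hmono : forall f : R -> R, (forall s, 0 <= s <= t -> exists d, is_derive f s d /\ 0 <= d) -> f 0 <= f t).
  { intros f Hf. destruct (Req_dec t 0) as [E|Hne]. rewrite E; lra.
    destruct (MVT_gen f 0 t (Derive f)) as [c [Hc Hfc]].
    - intros z Hz. rewrite Rmin_left in Hz by lra. rewrite Rmax_right in Hz by lra.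
      destruct (Hf z ltac:(lra)) as [d [Hd1 _]]. rewrite (is_derive_unique _ _ _ Hd1). exact Hd1.
    - intros z Hz. rewrite Rmin_left in Hz by lra. rewrite Rmax_right in Hz by lra.
      destruct (Hf z ltac:(lra)) as [d [Hd1 _]]. eapply der_cont; eauto.
    - rewrite Rmin_left in Hc by lra. rewrite Rmax_right in Hc by lra.
      destruct (Hf c Hc) as [d [Hd1 Hd2]]. rewrite (is_derive_unique _ _ _ Hd1) in Hfc.
      assert (0 <= d * (t - 0)) by (apply Rmult_le_pos; lra). lra. }
  assert (Hxt : x 0 <= x t).
  { apply Hmono. intros s Hs. eexists. split. apply (Hd s Hs). apply Huv; auto. }
  assert (Hyt : y 0 <= y t).
  { apply Hmono. intros s Hs. eexists. split. apply (Hd s Hs). apply Huv; auto. }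
  apply W1_iff; auto. lra.
  destruct (Huv t ltac:(lra)). repeat split; lra.
Qed.

Theorem lemma4p3 (k0 k1 km1 k2 eT : R) :
  0 < k0 -> 0 < k1 -> 0 < km1 -> 0 < k2 -> 0 < eT ->
  (* (a), no positive stationary point *)
  (k0 > k2 * eT ->
     (forall s, 0 <= s -> cnull k0 k1 km1 k2 eT s > snull k0 k1 km1 k2 eT s) /\
     (forall s, 0 <= s -> exists c, W1 k0 k1 km1 k2 eT s c)) /\
  (* (a), positive stationary point *)
  (k2 * eT > k0 ->
     cnull k0 k1 km1 k2 eT (shat k0 k1 km1 k2 eT) = chat k0 k1 km1 k2 eT /\
     snull k0 k1 km1 k2 eT (shat k0 k1 km1 k2 eT) = chat k0 k1 km1 k2 eT /\
     (forall s c, W1 k0 k1 km1 k2 eT s c ->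
        s <= shat k0 k1 km1 k2 eT /\ c <= chat k0 k1 km1 k2 eT)) /\
  (* (b) *)
  positively_invariant k0 k1 km1 k2 eT (W1 k0 k1 km1 k2 eT) /\
  (forall s c, W1 k0 k1 km1 k2 eT s c -> sdot k0 k1 km1 k2 eT s c >= 0).
Proof.
  intros Hk0 Hk1 Hkm1 Hk2 HeT.
  assert (Hgap : k0 > k2 * eT -> forall s, 0 <= s -> cnull k0 k1 km1 k2 eT s > snull k0 k1 km1 k2 eT s).
  { intros Hk s Hs. unfold cnull, snull.
    assert (D1 : k1 * s + km1 > 0) by nra.
    assert (D2 : k1 * s + km1 + k2 > 0) by nra.
    assert (Hnum : k1 * eT * s * (k1 * s + km1) - (k1 * eT * s - k0) * (k1 * s + km1 + k2) > 0).
    { assert (0 <= k1 * s * (k0 - k2 * eT)) by (apply Rmult_le_pos; [apply Rmult_le_pos|]; lra).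
      assert (0 < k0 * (km1 + k2)) by (apply Rmult_lt_0_compat; lra). lra. }
    apply Rminus_gt.
    replace (k1 * eT * s / (k1 * s + km1 + k2) - (k1 * eT * s - k0) / (k1 * s + km1))
      with ((k1 * eT * s * (k1 * s + km1) - (k1 * eT * s - k0) * (k1 * s + km1 + k2))
            / ((k1 * s + km1 + k2) * (k1 * s + km1))) by (field; lra).
    apply Rdiv_lt_0_compat; [lra | apply Rmult_lt_0_compat; lra]. }
  split; [|split; [|split]].
  - intros Hk. split. apply Hgap; auto.
    intros s Hs. exists (cnull k0 k1 km1 k2 eT s). unfold W1. split; auto. split; [|lra].
    apply Rmax_lub. unfold cnull. apply Rmult_le_pos. apply Rmult_le_pos; [apply Rmult_le_pos|]; lra.
    apply Rlt_le, Rinv_0_lt_compat; nra.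
    apply Rlt_le, Hgap; auto.
  - intros Hk. set (D := k2 * eT - k0). assert (HD : 0 < D) by (unfold D; lra).
    assert (Hks : k1 * shat k0 k1 km1 k2 eT = (km1 + k2) * k0 / D) by (unfold shat; fold D; field; lra).
    split; [|split].
    + unfold cnull, chat.
      replace (k1 * eT * shat k0 k1 km1 k2 eT) with (eT * ((km1 + k2) * k0 / D)) by (rewrite <- Hks; ring).
      rewrite Hks.
      replace ((km1 + k2) * k0 / D + km1 + k2) with ((km1 + k2) * (k2 * eT) / D) by (unfold D; field; lra).
      field. repeat split; lra.
    + unfold snull, chat.
      replace (k1 * eT * shat k0 k1 km1 k2 eT) with (eT * ((km1 + k2) * k0 / D)) by (rewrite <- Hks; ring).
      rewrite Hks.
      replace (eT * ((km1 + k2) * k0 / D) - k0) with (k0 * (eT * km1 + k0) / D) by (unfold D; field; lra).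
      replace ((km1 + k2) * k0 / D + km1) with (k2 * (k0 + km1 * eT) / D) by (unfold D; field; lra).
      field. assert (0 < k0 + km1 * eT) by nra. repeat split; lra.
    + intros s c HW. assert (Hs : 0 <= s) by (destruct HW; auto).
      apply W1_iff in HW; auto. destruct HW as [_ [Hc [Hu Hv]]].
      unfold sdot, cdot in Hu, Hv. split.
      * unfold shat. fold D. apply Rle_div_r; [apply Rmult_lt_0_compat; lra|].
        assert (D1 : k1 * s + km1 > 0) by nra.
        assert (D2 : k1 * s + km1 + k2 > 0) by nra.
        assert (H1 : 0 <= (k0 - k1 * (eT - c) * s + km1 * c) * (k1 * s + km1 + k2)) by (apply Rmult_le_pos; lra).
        assert (H2 : 0 <= (k1 * (eT - c) * s - (km1 + k2) * c) * (k1 * s + km1)) by (apply Rmult_le_pos; lra).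
        unfold D. nra.
      * unfold chat. apply Rle_div_r; lra.
  - apply invariance; auto.
  - intros s c HW. assert (Hs : 0 <= s) by (destruct HW; auto).
    apply W1_iff in HW; auto. tauto.
Qed.
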